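(* Let $M$ be a tall or square ACI-matrix over a field $\mathbb{F}$, and let $F_1,F_2$ be two disjoint semifactor sets of $M$. Then $F_1\cap F_2$ and $F_1\cup F_2$ are semifactor sets of $M$.
   Context: Let $\mathbb{F}$ be a field. An ACI-matrix is a matrix with entries in $\mathbb{F}[x_1,\dots,x_k]$ whose entries are polynomials of degree at most one and such that no indeterminate appears in two different columns. Tall/square means more rows than columns / equal numbers. A completion is an assignment of values in $\mathbb{F}$ to all indeterminates; $\mathrm{maxRank}(N)$ is the maximum rank of a completion. ACI-matrices (and blocks) of size $0\times q$ ($q>0$, wide degenerate), $p\times 0$ ($p>0$, tall degenerate) and $0\times0$ (void) are allowed. $N$ is FRmR if $\mathrm{maxRank}(N)=\mathrm{rows}(N)$, FCmR if $\mathrm{maxRank}(N)=\mathrm{cols}(N)$; by convention tall degenerate is FRmR, wide degenerate is FCmR, void is both. For an $m\times n$ block matrix $\begin{bmatrix} A & B\\ 0 & C\end{bmatrix}$ with lower-left $r\times s$ zero block, the zero block is Medium if $r+s=\max\{m,n\}$. For $F=\{f_1<\dots<f_s\}\subseteq\{1,\dots,n\}$ with complement $\{g_1<\dots<g_{n-s}\}$, $Q_F$ is the $n\times n$ permutation matrix such that $MQ_F$ has as columns $f_1,\dots,f_s,g_1,\dots,g_{n-s}$ of $M$ in that order. For an $m\times n$ ACI-matrix $M$, $F$ is a semifactor set of $M$ if there is a nonsingular constant $m\times m$ matrix $R$ with $RMQ_F=\begin{bmatrix} A & B\\ 0 & C\end{bmatrix}$, where $A$ has $\#F$ columns, the zero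 block is Medium, $A$ is FRmR and $C$ is FCmR. *)

(* Defs.v *)
From HB Require Import structures.
From mathcomp Require Import all_boot all_order all_algebra all_fingroup.
From mathcomp Require Import mpoly.
Set Implicit Arguments. Unset Strict Implicit. Unset Printing Implicit Defensive.
Import GRing.Theory.
Local Open Scope ring_scope.

(* ACI-matrices over a field K in k indeterminates x_0..x_{k-1}, represented
   as matrices with entries in {mpoly K[k]}. *)

Definition var_occurs (K : fieldType) (k : nat) (v : 'I_k) (p : {mpoly K[k]}) : Prop :=
  exists2 mm, mm \in msupp p & (0 < mm v)%N.

(* degree at most one *)
Definition deg_le1 (K : fieldType) (k : nat) (p : {mpoly K[k]}) : Prop :=
  (msize p <= 2)%N.

Definition is_ACI (K : fieldType) (k m n : nat) (M : 'M[{mpoly K[k]}]_(m, n)) : Prop :=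
  (forall i j, deg_le1 (M i j)) /\
  (forall (v : 'I_k) (i1 i2 : 'I_m) (j1 j2 : 'I_n),
      var_occurs v (M i1 j1) -> var_occurs v (M i2 j2) -> j1 = j2).

Definition completion (K : fieldType) (k m n : nat) (M : 'M[{mpoly K[k]}]_(m, n))
  (x : 'I_k -> K) : 'M[K]_(m, n) := map_mx (fun p => p.@[x]) M.

Definition is_maxRank (K : fieldType) (k m n : nat) (M : 'M[{mpoly K[k]}]_(m, n))
  (r : nat) : Prop :=
  (exists x, \rank (completion M x) = r) /\ (forall x, (\rank (completion M x) <= r)%N).

(* full row maximum rank; tall degenerate (p x 0, p>0) and void count as FRmR *)
Definition FRmR (K : fieldType) (k m n : nat) (M : 'M[{mpoly K[k]}]_(m, n)) : Prop :=
  n = 0%N \/ is_maxRank M m.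

(* full column maximum rank; wide degenerate (0 x q, q>0) and void count as FCmR *)
Definition FCmR (K : fieldType) (k m n : nat) (M : 'M[{mpoly K[k]}]_(m, n)) : Prop :=
  m = 0%N \/ is_maxRank M n.

(* the column order f_1 < ... < f_s, g_1 < ... < g_{n-s} *)
Definition colorder (n : nat) (F : {set 'I_n}) : seq 'I_n := enum F ++ enum (~: F).

(* Q_F : column j of M Q_F is column (nth j (colorder F) j) of M *)
Definition QF (R : pzRingType) (n : nat) (F : {set 'I_n}) : 'M[R]_n :=
  \matrix_(i, j) ((i == nth j (colorder F) j)%:R).

Definition semifactor (K : fieldType) (k m n : nat) (M : 'M[{mpoly K[k]}]_(m, n))
  (F : {set 'I_n}) : Prop :=
  exists (R : 'M[K]_m), R \in unitmx /\
  exists (p r t : nat) (eqm : (p + r)%N = m) (eqn : (#|F| + t)%N = n)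
    (A : 'M[{mpoly K[k]}]_(p, #|F|)) (B : 'M[{mpoly K[k]}]_(p, t))
    (C : 'M[{mpoly K[k]}]_(r, t)),
    map_mx (fun c => c%:MP) R *m M *m QF _ F = castmx (eqm, eqn) (block_mx A B 0 C)
    /\ (r + #|F|)%N = maxn m n
    /\ FRmR A /\ FCmR C.

(* Main.v *)
Require Import Defs.
From HB Require Import structures.
From mathcomp Require Import all_boot all_order all_algebra all_fingroup.
From mathcomp Require Import mpoly.
From mathcomp Require Import zify.
Set Implicit Arguments. Unset Strict Implicit. Unset Printing Implicit Defensive.
Import GRing.Theory.
Local Open Scope ring_scope.
Section Rank.
Variable K : fieldType.

Lemma rank_col_le m1 m2 n (A : 'M[K]_(m1,n)) (B : 'M[K]_(m2,n)) :
  (\rank (col_mx A B) <= \rank A + \rank B)%N.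
Proof. rewrite -addsmxE. exact: (mxrank_adds_leqif A B).1. Qed.

Lemma rank_row_le m n1 n2 (A : 'M[K]_(m,n1)) (B : 'M[K]_(m,n2)) :
  (\rank (row_mx A B) <= \rank A + \rank B)%N.
Proof. by rewrite -mxrank_tr tr_row_mx -(mxrank_tr A) -(mxrank_tr B) rank_col_le. Qed.

Lemma rank_row0 m n1 n2 (C : 'M[K]_(m,n2)) :
  (\rank (row_mx (0 : 'M[K]_(m,n1)) C) <= \rank C)%N.
Proof.
have -> : row_mx (0 : 'M[K]_(m,n1)) C = C *m row_mx 0 1%:M.
  by rewrite mul_mx_row mulmx0 mulmx1.
exact: mxrankM_maxl.
Qed.

Lemma rank_col0 m1 m2 n (A : 'M[K]_(m1,n)) :
  (\rank (col_mx A (0 : 'M[K]_(m2,n))) <= \rank A)%N.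
Proof.
have -> : col_mx A (0 : 'M[K]_(m2,n)) = col_mx 1%:M 0 *m A.
  by rewrite mul_col_mx mul0mx mul1mx.
exact: mxrankM_maxr.
Qed.

Lemma block_ranks p r q t (Z : 'M[K]_(p + r, q + t)) :
  dlsubmx Z = 0 -> \rank Z = (q + t)%N -> (p <= q)%N ->
  \rank (ulsubmx Z) = q /\ \rank (drsubmx Z) = t.
Proof.
move=> Zdl rZ pq.
have eZ := submxK Z; rewrite Zdl in eZ.
have h1 : (\rank Z <= \rank (ulsubmx Z) + t)%N.
  rewrite -{1}eZ block_mxEh.
  apply: leq_trans (rank_row_le _ _) _; apply: leq_add; last exact: rank_leq_col.
  exact: rank_col0.
have h2 : (\rank Z <= p + \rank (drsubmx Z))%N.
  rewrite -{1}eZ block_mxEv.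
  apply: leq_trans (rank_col_le _ _) _; apply: leq_add; first exact: rank_leq_row.
  exact: rank_row0.
have := rank_leq_col (ulsubmx Z); have := rank_leq_col (drsubmx Z).
lia.
Qed.

Lemma block_full p r q t (A : 'M[K]_(p, q)) (B : 'M[K]_(p, t)) (C : 'M[K]_(r, t)) :
  \rank A = q -> \rank C = t -> \rank (block_mx A B 0 C) = (q + t)%N.
Proof.
move=> rA rC.
have /row_fullP [A' hA] : row_full A by rewrite /row_full rA.
have /row_fullP [C' hC] : row_full C by rewrite /row_full rC.
apply/eqP; rewrite eqn_leq rank_leq_col /=.
set L := block_mx A' (- (A' *m B *m C')) 0 C'.
have : L *m block_mx A B 0 C = 1%:M.
  rewrite mulmx_block hA hC !mulmx0 !mul0mx addr0 add0r.
  rewrite add0r mulNmx -!mulmxA hC mulmx1 addrN.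
  by rewrite -scalar_mx_block.
move=> h; rewrite -{1}(mxrank1 K (q + t)) -h; exact: mxrankM_maxr.
Qed.
End Rank.
Section QF.
Variable n : nat.
Variable F : {set 'I_n}.

Lemma size_colorder : size (colorder F) = n.
Proof. by rewrite /colorder size_cat -!cardE cardsC card_ord. Qed.

Lemma uniq_colorder : uniq (colorder F).
Proof.
rewrite /colorder cat_uniq !enum_uniq /= andbT.
apply/hasPn => x; rewrite !mem_enum inE => xF; by rewrite xF.
Qed.

Lemma nth_colorder_in (c : 'I_n) : (c < #|F|)%N -> nth c (colorder F) c \in F.
Proof.
move=> cF; rewrite /colorder nth_cat -cardE cF.
by rewrite -mem_enum mem_nth // -cardE.
Qed.

Lemma nth_colorder_out (c : 'I_n) : (#|F| <= c)%N -> nth c (colorder F) c \notin F.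
Proof.
move=> cF; rewrite /colorder nth_cat -cardE ltnNge cF /=.
have : nth c (enum (~: F)) (c - #|F|) \in ~: F.
  rewrite -mem_enum mem_nth // -cardE.
  have := cardsC F; rewrite card_ord => h. by rewrite ltn_subLR // h.
by rewrite inE.
Qed.

Lemma colorder_index (j : 'I_n) : j \in F ->
  exists c : 'I_n, (c < #|F|)%N /\ nth c (colorder F) c = j.
Proof.
move=> jF.
have hi : (index j (enum F) < #|F|)%N by rewrite cardE index_mem mem_enum.
have hn : (index j (enum F) < n)%N.
  apply: leq_trans hi _; have := max_card F; by rewrite card_ord.
exists (Ordinal hn) => /=; split => //.
by rewrite /colorder nth_cat -cardE hi nth_index // mem_enum.
Qed.

Lemma nth_colorder_inj : injective (fun c : 'I_n => nth c (colorder F) c).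
Proof.
move=> a b /= e.
have hb : (b < size (colorder F))%N by rewrite size_colorder.
have ha : (a < size (colorder F))%N by rewrite size_colorder.
rewrite (set_nth_default a) // in e.
apply/val_inj/eqP; by rewrite -(nth_uniq a ha hb uniq_colorder) e.
Qed.

Lemma colQF (R : pzRingType) m (X : 'M[R]_(m,n)) i c :
  (X *m QF R F) i c = X i (nth c (colorder F) c).
Proof.
rewrite mxE (bigD1 (nth c (colorder F) c)) //= mxE eqxx mulr1 big1 ?addr0 //.
by move=> k /negbTE hk; rewrite mxE hk mulr0.
Qed.

Lemma QF_unit (K : fieldType) : QF K F \in unitmx.
Proof.
have h : (QF K F)^T *m QF K F = 1%:M.
  apply/matrixP => a b; rewrite mxE (bigD1 (nth a (colorder F) a)) //=.
  rewrite !mxE eqxx mul1r big1 ?addr0.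
    case: (a =P b) => [<-|nab]; first by rewrite eqxx.
    rewrite (inj_eq nth_colorder_inj); by case: eqP.
  move=> k hk; rewrite !mxE. by rewrite (negbTE hk) mul0r.
by case: (mulmx1_unit h).
Qed.
End QF.
Lemma rank_castmx (K : fieldType) m1 n1 m2 n2 (e : (m1 = m2) * (n1 = n2)) (A : 'M[K]_(m1,n1)) :
  \rank (castmx e A) = \rank A.
Proof. case: e => e1 e2; subst; by rewrite castmx_id. Qed.

Lemma mul_pid_r (R : pzRingType) m n a (Y : 'M[R]_(m, n)) i (l : 'I_n) :
  (Y *m (pid_mx a : 'M_n)) i l = if (l < a)%N then Y i l else 0.
Proof.
rewrite mxE (bigD1 l) //= big1 ?addr0.
  rewrite mxE eqxx /=. by case: (l < a)%N; rewrite ?mulr1 ?mulr0.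
move=> k kl; rewrite mxE.
have -> : (k == l :> nat) = false by apply/negbTE.
by rewrite mulr0.
Qed.

Lemma mul_pid_l (R : pzRingType) m n a (Y : 'M[R]_(m, n)) (i : 'I_m) l :
  ((pid_mx a : 'M_m) *m Y) i l = if (i < a)%N then Y i l else 0.
Proof.
rewrite mxE (bigD1 i) //= big1 ?addr0.
  rewrite mxE eqxx /=. by case: (i < a)%N; rewrite ?mul1r ?mul0r.
move=> k kl; rewrite mxE.
have -> : (i == k :> nat) = false by apply/negbTE; rewrite eq_sym.
by rewrite mul0r.
Qed.

Lemma mul_pid_l0 (R : pzRingType) m p n a (Y : 'M[R]_(p, n)) (i : 'I_m) l :
  (a <= i)%N -> ((pid_mx a : 'M_(m, p)) *m Y) i l = 0.
Proof.
move=> h; rewrite mxE big1 // => k _; rewrite mxE.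
by rewrite ltnNge h andbF mul0r.
Qed.

Section Main.
Variables (K : fieldType) (k m n : nat) (M : 'M[{mpoly K[k]}]_(m, n)).

Definition Rp (R : 'M[K]_m) : 'M[{mpoly K[k]}]_m := map_mx (fun c => c%:MP) R.

Definition ZL (R : 'M[K]_m) (F : {set 'I_n}) : Prop :=
  forall (i : 'I_m) (j : 'I_n), j \in F -> (#|F| <= i)%N ->
    (map_mx (fun c => c%:MP) R *m M) i j = 0.

Lemma Rp_mul m' (S T : 'M[K]_(m', m')) :
  map_mx (fun c => c%:MP) (S *m T) = map_mx (fun c => c%:MP) S *m map_mx (fun c => c%:MP) T :> 'M[{mpoly K[k]}]_m'.
Proof. by rewrite map_mxM. Qed.

Lemma completion_RMQ (R : 'M[K]_m) F x :
  completion (map_mx (fun c => c%:MP) R *m M *m QF _ F) x = R *m completion M x *m QF K F.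
Proof.
rewrite /completion map_mxM map_mxM. congr (_ *m _ *m _).
  by apply/matrixP => i j; rewrite !mxE; exact: mevalC.
by apply/matrixP => i j; rewrite !mxE rmorph_nat.
Qed.

Lemma eval_agree (p : {mpoly K[k]}) (x y : 'I_k -> K) :
  (forall v, var_occurs v p -> x v = y v) -> p.@[x] = p.@[y].
Proof.
move=> h; rewrite !mevalE; apply: eq_big_seq => mm hm; congr (_ * _).
apply: eq_bigr => v _; case: (posnP (mm v)) => [->|hv]; first by rewrite !expr0.
by rewrite (h v) //; exists mm.
Qed.

Lemma eval_RM (R : 'M[K]_m) (x y : 'I_k -> K) i j :
  (forall l, (M l j).@[x] = (M l j).@[y]) ->
  ((map_mx (fun c => c%:MP) R *m M) i j).@[x] = ((map_mx (fun c => c%:MP) R *m M) i j).@[y].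
Proof.
move=> h; rewrite !mxE !raddf_sum; apply: eq_bigr => l _.
rewrite !mxE.
have e z : ((R i l)%:MP * M l j).@[z] = R i l * (M l j).@[z] by rewrite mevalM mevalC.
transitivity (R i l * (M l j).@[x]); first exact: e.
rewrite h; symmetry; exact: e.
Qed.

Lemma card_le_n (F : {set 'I_n}) : (#|F| <= n)%N.
Proof. by have := max_card F; rewrite card_ord. Qed.

Lemma build (F : {set 'I_n}) : (n <= m)%N ->
  (exists x, \rank (completion M x) = n) ->
  (exists R, R \in unitmx /\ ZL R F) -> semifactor M F.
Proof.
move=> nm [x rx] [R [uR zl]]; exists R; split => //.
have Fn := card_le_n F.
have Fm : (#|F| <= m)%N by apply: leq_trans nm.
set X := map_mx _ R *m M *m QF _ F.
have eqm : (#|F| + (m - #|F|))%N = m by rewrite subnKC.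
have eqn : (#|F| + (n - #|F|))%N = n by rewrite subnKC.
set Y := castmx (esym eqm, esym eqn) X.
have Ydl : dlsubmx Y = 0.
  apply/matrixP => i j; rewrite !mxE castmxE /= colQF; apply: zl.
    by apply: nth_colorder_in => /=.
  by rewrite /= leq_addr.
exists #|F|, (m - #|F|)%N, (n - #|F|)%N, eqm, eqn, (ulsubmx Y), (ursubmx Y), (drsubmx Y).
split; first by rewrite -Ydl submxK /Y castmxKV.
split; first by rewrite (maxn_idPl nm) subnK.
set Z := completion Y x.
have rZ : \rank Z = (#|F| + (n - #|F|))%N.
  have -> : Z = castmx (esym eqm, esym eqn) (completion X x).
    by apply/matrixP => i j; rewrite /Z /completion /Y [LHS]mxE !castmxE [RHS]mxE.
  rewrite rank_castmx completion_RMQ mxrankMfree; last by rewrite row_free_unit QF_unit.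
  transitivity n; last by rewrite subnKC.
  apply/eqP; rewrite eqn_leq; apply/andP; split.
    apply: leq_trans (mxrankM_maxr _ _) _; by rewrite rx.
  rewrite -[X in (X <= _)%N]rx -{1}(mulKmx uR (completion M x)); exact: mxrankM_maxr.
have Zdl : dlsubmx Z = 0.
  have -> : dlsubmx Z = map_mx (fun p => p.@[x]) (dlsubmx Y) by apply/matrixP => i j; rewrite !mxE.
  by rewrite Ydl; apply/matrixP => i j; rewrite !mxE; exact: meval0.
have [hA hC] := block_ranks Zdl rZ (leqnn _).
split.
  right; split; last by move=> y; exact: rank_leq_col.
  by exists x; transitivity (\rank (ulsubmx Z)) => //; congr (\rank _); apply/matrixP => i j; rewrite !mxE.
right; split; last by move=> y; exact: rank_leq_col.
by exists x; transitivity (\rank (drsubmx Z)) => //; congr (\rank _); apply/matrixP => i j; rewrite !mxE.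
Qed.

Lemma extract (F : {set 'I_n}) : is_ACI M -> (n <= m)%N -> semifactor M F ->
  (exists x, \rank (completion M x) = n) /\ (exists R, R \in unitmx /\ ZL R F).
Proof.
move=> [_ aci] nm [R [uR [p [r [t [eqm [eqn [A [B [C [E [hmax [hA hC]]]]]]]]]]]]].
rewrite (maxn_idPl nm) in hmax.
have pF : p = #|F| by lia.
subst p.
set X := map_mx _ R *m M *m QF _ F in E.
have EY : castmx (esym eqm, esym eqn) X = block_mx A B 0 C by rewrite E castmxK.
split; last first.
  exists R; split => // i j jF iF.
  have [c [cF cj]] := colorder_index jF.
  rewrite -cj -colQF.
  have hi : (i - #|F| < r)%N by have := ltn_ord i; lia.
  have := congr1 (fun Z => dlsubmx Z (Ordinal hi) (Ordinal cF)) EY.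
  rewrite /= block_mxKdl [RHS]mxE => h; rewrite -h [RHS]mxE [RHS]mxE castmxE.
  have e : (#|F| + (i - #|F|))%N = i := subnKC iF.
  by congr (_ _ _); apply: ord_inj; [exact: (esym e) | by []].
have [xA rA] : exists xA, \rank (completion A xA) = #|F|.
  case: hA => [h0|[[xA hxA] _]]; last by exists xA.
  exists (fun _ => 0); have := rank_leq_col (completion A (fun _ => 0)); lia.
have [xC rC] : exists xC, \rank (completion C xC) = t.
  case: hC => [h0|[[xC hxC] _]]; last by exists xC.
  exists (fun _ => 0); have := rank_leq_col (completion C (fun _ => 0)); lia.
pose occF v := [exists i, exists j, (j \in F) &&
   has (fun mm : 'X_{1..k} => (0 < mm v)%N) (msupp (M i j))].
pose x v := if occF v then xA v else xC v.
have exA : forall l j, j \in F -> (M l j).@[x] = (M l j).@[xA].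
  move=> l j jF; apply: eval_agree => v [mm hm hv]; rewrite /x.
  suff -> : occF v by [].
  by apply/existsP; exists l; apply/existsP; exists j; rewrite jF; apply/hasP; exists mm.
have exC : forall l j, j \notin F -> (M l j).@[x] = (M l j).@[xC].
  move=> l j jF; apply: eval_agree => v occ; rewrite /x.
  case: ifP => // /existsP [i2 /existsP [j2 /andP [j2F /hasP [mm2 hm2 hv2]]]].
  have e : j = j2 by apply: (aci v l i2 j j2 occ); exists mm2.
  by rewrite e j2F in jF.
set Z := completion (block_mx A B 0 C) x.
have ZA : ulsubmx Z = completion A xA.
  have -> : ulsubmx Z = completion (ulsubmx (block_mx A B 0 C)) x.
    by apply/matrixP => a b; rewrite !mxE.
  rewrite block_mxKul; apply/matrixP => a b; rewrite /completion [LHS]mxE [RHS]mxE.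
  have -> : A a b = castmx (esym eqm, esym eqn) X (lshift r a) (lshift t b) by rewrite EY block_mxEul.
  rewrite castmxE /X colQF; apply: eval_RM => l; apply: exA; apply: nth_colorder_in.
  exact: (ltn_ord b).
have ZC : drsubmx Z = completion C xC.
  have -> : drsubmx Z = completion (drsubmx (block_mx A B 0 C)) x.
    by apply/matrixP => a b; rewrite !mxE.
  rewrite block_mxKdr; apply/matrixP => a b; rewrite /completion [LHS]mxE [RHS]mxE.
  have -> : C a b = castmx (esym eqm, esym eqn) X (rshift #|F| a) (rshift #|F| b) by rewrite EY block_mxEdr.
  rewrite castmxE /X colQF; apply: eval_RM => l; apply: exC; apply: nth_colorder_out.
  exact: leq_addr.
have Zdl : dlsubmx Z = 0.
  have -> : dlsubmx Z = completion (dlsubmx (block_mx A B 0 C)) x.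
    by apply/matrixP => a b; rewrite !mxE.
  rewrite block_mxKdl; apply/matrixP => a b; rewrite !mxE; exact: meval0.
have rZ : \rank Z = (#|F| + t)%N.
  rewrite -(submxK Z) ZA ZC Zdl; exact: block_full.
exists x; apply/eqP; rewrite eqn_leq rank_leq_col /=.
have : (\rank Z <= \rank (completion M x))%N.
  have -> : Z = castmx (esym eqm, esym eqn) (completion X x).
    rewrite /Z -EY; apply/matrixP => a b; by rewrite [LHS]mxE !castmxE [RHS]mxE.
  rewrite rank_castmx /X completion_RMQ; apply: leq_trans (mxrankM_maxl _ _) _.
  exact: mxrankM_maxr.
rewrite rZ => h; apply: leq_trans h; by rewrite eqn.
Qed.

Lemma ZL_expand (R' S : 'M[K]_m) (F : {set 'I_n}) : R' \in unitmx -> ZL R' F ->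
  forall i j, j \in F ->
  (map_mx (fun c => c%:MP) S *m M) i j =
  \sum_l ((S *m invmx R' *m (pid_mx #|F| : 'M_m)) i l)%:MP * (map_mx (fun c => c%:MP) R' *m M) l j.
Proof.
move=> uR zl i j jF.
have e : map_mx (fun c => c%:MP) S *m M =
  map_mx (fun c => c%:MP) (S *m invmx R') *m (map_mx (fun c => c%:MP) R' *m M) :> 'M[{mpoly K[k]}]_(m, n).
  by rewrite mulmxA -map_mxM -mulmxA mulVmx // mulmx1.
rewrite e mxE; apply: eq_bigr => l _; rewrite mul_pid_r mxE.
by case: ltnP => hl //; rewrite zl // !mulr0.
Qed.

Lemma union (F1 F2 : {set 'I_n}) R1 R2 : (n <= m)%N -> [disjoint F1 & F2] ->
  R1 \in unitmx -> ZL R1 F1 -> R2 \in unitmx -> ZL R2 F2 ->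
  exists R, R \in unitmx /\ ZL R (F1 :|: F2).
Proof.
move=> nm dj u1 z1 u2 z2.
have cU : #|F1 :|: F2| = (#|F1| + #|F2|)%N by rewrite cardsU (disjoint_setI0 dj) cards0 subn0.
have hab : (#|F1| + #|F2| <= m)%N by rewrite -cU; apply: leq_trans (card_le_n _) nm.
set W1 := invmx R1 *m (pid_mx #|F1| : 'M[K]_m).
set W2 := invmx R2 *m (pid_mx #|F2| : 'M[K]_m).
set W := row_mx W1 W2.
have rW : (\rank W <= #|F1| + #|F2|)%N.
  apply: leq_trans (rank_row_le _ _) _; apply: leq_add;
    (apply: leq_trans (mxrankM_maxr _ _) _; rewrite rank_pid_mx //; lia).
exists (invmx (col_ebase W)); split; first by rewrite unitmx_inv col_ebase_unit.
have RW : invmx (col_ebase W) *m W = pid_mx (\rank W) *m row_ebase W.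
  have eW := mulmx_ebase W.
  by rewrite -[X in _ *m X = _]eW !mulmxA mulVmx ?col_ebase_unit // mul1mx.
have RW0 : forall (i : 'I_m) l, (#|F1| + #|F2| <= i)%N -> (invmx (col_ebase W) *m W) i l = 0.
  move=> i l hi; rewrite RW mul_pid_l0 //; exact: leq_trans rW hi.
move=> i j; rewrite inE cU => /orP [jF|jF] hi.
  rewrite (ZL_expand _ u1 z1 _ jF); apply: big1 => l _.
  have -> : invmx (col_ebase W) *m invmx R1 *m pid_mx #|F1| =
            invmx (col_ebase W) *m W *m col_mx 1%:M 0.
    by rewrite -!mulmxA mul_row_col mulmx1 mulmx0 addr0.
  rewrite mxE big1 ?mpolyC0 ?mul0r // => l' _; by rewrite RW0 // mul0r.
rewrite (ZL_expand _ u2 z2 _ jF); apply: big1 => l _.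
have -> : invmx (col_ebase W) *m invmx R2 *m pid_mx #|F2| =
          invmx (col_ebase W) *m W *m col_mx 0 1%:M.
  by rewrite -!mulmxA mul_row_col mulmx1 mulmx0 add0r.
rewrite mxE big1 ?mpolyC0 ?mul0r // => l' _; by rewrite RW0 // mul0r.
Qed.
End Main.

Unset Implicit Arguments.
Theorem theorem5p4 (K : fieldType) (k m n : nat) (M : 'M[{mpoly K[k]}]_(m, n))
  (F1 F2 : {set 'I_n}) :
  is_ACI M -> (n <= m)%N ->
  [disjoint F1 & F2] ->
  semifactor M F1 -> semifactor M F2 ->
  semifactor M (F1 :&: F2) /\ semifactor M (F1 :|: F2).
Proof.
move=> aci nm dj s1 s2.
have [[x rx] [R1 [u1 z1]]] := extract aci nm s1.
have [_ [R2 [u2 z2]]] := extract aci nm s2.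
split; apply: build => //; try by exists x.
  exists 1%:M; split; first exact: unitmx1.
  by move=> i j; rewrite (disjoint_setI0 dj) in_set0.
exact: union u1 z1 u2 z2.
Qed.
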